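(* Let $(X,\phi)$ be a uniformly Lipschitz flow on a compact metric space $(X,d)$, let $L=L(1)$, and let $\mu\in\mathcal{M}(X)$. Then for every $\epsilon>0$ and every $x\in X$, \begin{align*} \overline{h}^{BK}_\mu(\phi_1,x,\epsilon)\le\overline{h}^{BK}_\mu(\phi,x,\epsilon)\le\overline{h}^{BK}_\mu(\phi_1,x,\epsilon/L),\\ \underline{h}^{BK}_\mu(\phi_1,x,\epsilon)\le\underline{h}^{BK}_\mu(\phi,x,\epsilon)\le\underline{h}^{BK}_\mu(\phi_1,x,\epsilon/L). \end{align*}
   Context: A flow: $\phi:X\times\mathbb{R}\to X$ continuous, $\phi_t(x)=\phi(x,t)$, $\phi_0=\mathrm{id}$, $\phi_{t+s}=\phi_t\circ\phi_s$. Uniformly Lipschitz: for every $t_0>0$ there is $L(t_0)>0$ such that for all $\epsilon>0$ and $x,y\in X$, $d(x,y)\le\epsilon/L(t_0)$ implies $d(\phi_sx,\phi_sy)<\epsilon$ for all $s\in[0,t_0]$. $\mathcal{M}(X)$: Borel probability measures on $X$. Balls: $B_t(x,\epsilon,\phi)=\{y:d(\phi_sx,\phi_sy)<\epsilon\ \forall s\in[0,t]\}$, $B_n(x,\epsilon,\phi_1)=\{y:d(\phi_jx,\phi_jy)<\epsilon,\ j=0,\dots,n-1\}$. Local entropies: $\overline{h}^{BK}_\mu(\phi,x,\epsilon)=\limsup_{t\to\infty}-\frac1t\log\mu(B_t(x,\epsilon,\phi))$, $\underline{h}^{BK}_\mu(\phi,x,\epsilon)=\liminf_{t\to\infty}-\frac1t\log\mu(B_t(x,\epsilon,\phi))$,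 and $\overline{h}^{BK}_\mu(\phi_1,x,\epsilon)$, $\underline{h}^{BK}_\mu(\phi_1,x,\epsilon)$ are the $\limsup$, $\liminf$ over $n\in\mathbb{N}$, $n\to\infty$, of $-\frac1n\log\mu(B_n(x,\epsilon,\phi_1))$. *)

(* Defs.v *)
From HB Require Import structures.
From mathcomp Require Import all_boot all_order all_algebra.
From mathcomp Require Import all_classical all_reals all_analysis.
Set Implicit Arguments. Unset Strict Implicit. Unset Printing Implicit Defensive.
Import Order.TTheory GRing.Theory Num.Theory.
Import numFieldNormedType.Exports.
Local Open Scope classical_set_scope.
Local Open Scope ring_scope.

#[short(type="pmetricType")]
HB.structure Definition PointedMetric (K : numDomainType) :=
  { M of Metric K M & isPointed M }.

Section Flows.
Context {R : realType} {X : pmetricType R}.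

Definition borelX := g_sigma_algebraType (@open X).

(** phi x t = phi_t(x);  a (continuous) flow *)
Definition is_flow (phi : X -> R -> X) : Prop :=
  continuous (fun p : X * R => phi p.1 p.2) /\
  (forall x, phi x 0 = x) /\
  (forall x t s, phi x (t + s) = phi (phi x s) t).

Definition unif_lipschitz_with (phi : X -> R -> X) (L : R -> R) : Prop :=
  forall t0, 0 < t0 ->
    0 < L t0 /\
    forall eps, 0 < eps -> forall x y, mdist x y <= eps / L t0 ->
      forall s, 0 <= s <= t0 -> mdist (phi x s) (phi y s) < eps.

Definition bowen_ball_flow (phi : X -> R -> X) (t : R) (x : X) (eps : R) : set X :=
  [set y | forall s, 0 <= s <= t -> mdist (phi x s) (phi y s) < eps].

Definition bowen_ball_map (phi : X -> R -> X) (n : nat) (x : X) (eps : R) : set X :=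
  [set y | forall j : nat, (j < n)%N -> mdist (phi x j%:R) (phi y j%:R) < eps].

(** - (1/t) log m, as an extended real (= +oo when m = 0) *)
Definition neglog_rate (m : \bar R) (t : R) : \bar R :=
  ((- lne m) * (t^-1)%:E)%E.

Definition upper_BK_flow (mu : probability borelX R) (phi : X -> R -> X) (x : X) (eps : R) : \bar R :=
  limf_esup (fun t : R => neglog_rate (mu (bowen_ball_flow phi t x eps)) t) (pinfty_nbhs R).

Definition lower_BK_flow (mu : probability borelX R) (phi : X -> R -> X) (x : X) (eps : R) : \bar R :=
  limf_einf (fun t : R => neglog_rate (mu (bowen_ball_flow phi t x eps)) t) (pinfty_nbhs R).

Definition upper_BK_map (mu : probability borelX R) (phi : X -> R -> X) (x : X) (eps : R) : \bar R :=
  limn_esup (fun n : nat => neglog_rate (mu (bowen_ball_map phi n x eps)) n%:R).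

Definition lower_BK_map (mu : probability borelX R) (phi : X -> R -> X) (x : X) (eps : R) : \bar R :=
  limn_einf (fun n : nat => neglog_rate (mu (bowen_ball_map phi n x eps)) n%:R).

End Flows.

(* Main.v *)
Set Warnings "-all".
Require Import Defs.
From HB Require Import structures.
From mathcomp Require Import all_boot all_order all_algebra.
From mathcomp Require Import all_classical all_reals all_analysis.
From mathcomp Require Import ring lra.
Import Order.TTheory GRing.Theory Num.Theory.
Import numFieldNormedType.Exports.
Local Open Scope classical_set_scope.
Local Open Scope ring_scope.

Section Lim.
Context (R : realType).
Local Open Scope ereal_scope.

Lemma esup_le (f : R -> \bar R) (g : nat -> \bar R) :
  (forall W, pinfty_nbhs R W -> exists N, forall n, (N <= n)%N -> exists t, W t /\ g n <= f t) ->
  limn_esup g <= limf_esup f (pinfty_nbhs R).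
Proof.
move=> H; rewrite /limn_esup !limf_esupE.
apply: le_ereal_inf_tmp => _ [W hW <-].
have [N HN] := H W hW.
apply: (@le_trans _ _ (ereal_sup (g @` [set n | (N <= n)%N]))).
  by apply: ereal_inf_lbound; exists [set n | (N <= n)%N] => //; exists N.
apply: ub_ereal_sup => _ [n /= nN <-].
have [t [Wt le]] := HN n nN.
apply: (le_trans le); apply: ereal_sup_ubound; by exists t.
Qed.

Lemma einf_le (f : R -> \bar R) (g : nat -> \bar R) :
  (forall N, exists M : R, forall t, (M < t)%R -> exists n, (N <= n)%N /\ g n <= f t) ->
  limn_einf g <= limf_einf f (pinfty_nbhs R).
Proof.
move=> H; rewrite /limn_einf -/(limf_einf g \oo) !limf_einfE.
apply: ub_ereal_sup => _ [V [N _ hV] <-].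
have [M HM] := H N.
apply: le_ereal_sup_tmp; exists (ereal_inf (f @` [set t | (M < t)%R])).
  exists [set t | (M < t)%R] => //; exists M; split => //; exact: num_real.
apply: le_ereal_inf_tmp => _ [t /= Mt <-].
have [n [nN le]] := HM t Mt.
apply: le_trans le; apply: ereal_inf_lbound; exists n => //; exact: hV.
Qed.

Lemma einf_le2 (f : R -> \bar R) (g : nat -> \bar R) :
  (forall W, pinfty_nbhs R W -> exists N, forall n, (N <= n)%N -> exists t, W t /\ f t <= g n) ->
  limf_einf f (pinfty_nbhs R) <= limn_einf g.
Proof.
move=> H; rewrite /limn_einf -/(limf_einf g \oo) !limf_einfE.
apply: ub_ereal_sup => _ [W hW <-].
have [N HN] := H W hW.
apply: le_ereal_sup_tmp; exists (ereal_inf (g @` [set n | (N <= n)%N])).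
  by exists [set n | (N <= n)%N] => //; exists N.
apply: le_ereal_inf_tmp => _ [n /= nN <-].
have [t [Wt le]] := HN n nN.
apply: le_trans le; apply: ereal_inf_lbound; by exists t.
Qed.

Lemma esup_le_factor (f : R -> \bar R) (b : nat -> \bar R) :
  (forall n, 0 <= b n) ->
  (forall t, (1 <= t)%R -> exists n : nat,
     [/\ (t <= n%:R)%R, (n%:R <= t + 1)%R & f t <= b n * (n%:R / t)%:E]) ->
  limf_esup f (pinfty_nbhs R) <= limn_esup b.
Proof.
move=> b0 H.
have S0 : 0 <= limn_esup b.
  apply: limf_esup_ge0 => //.
move: S0; case E : (limn_esup b) => [s| |] S0 //; last exact: leey.
have s0 : (0 <= s)%R by move: S0; rewrite lee_fin.
apply/lee_addgt0Pr => d d0.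
set dl := (d / 2)%R.
have dl0 : (0 < dl)%R by rewrite divr_gt0.
have : ereal_inf [set ereal_sup (b @` V) | V in \oo] < (s + dl)%:E.
  by rewrite -limf_esupE -/(limn_esup b) E lte_fin ltrDl.
move=> /ereal_inf_lt [_ [W [N _ hN] <-] supW].
set M := (Num.max (Num.max N%:R 1) ((s + dl) / dl))%R.
apply: (@le_trans _ _ (ereal_sup (f @` [set t | (M < t)%R]))).
  rewrite limf_esupE; apply: ereal_inf_lbound; exists [set t | (M < t)%R] => //.
  exists M; split => //; exact: num_real.
apply: ub_ereal_sup => _ [t /= Mt <-].
move: Mt; rewrite !gt_max => /andP[/andP[Nt t1] st].
have t0 : (0 < t)%R by lra.
have [n [tn nt le]] := H t (ltW t1).
have nN : (N <= n)%N.
  by rewrite -(ler_nat R); apply: ltW; apply: (lt_le_trans Nt tn).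
have bn : b n <= (s + dl)%:E.
  apply/ltW/(le_lt_trans _ supW); apply: ereal_sup_ubound; exists n => //; exact: hN.
apply: (le_trans le).
have n0 : (0 <= n%:R / t)%R by rewrite divr_ge0 // ltW.
apply: (le_trans (lee_wpmul2r _ bn)); first by rewrite lee_fin.
rewrite -EFinM -EFinD lee_fin.
rewrite mulrA ler_pdivrMr //.
move: st; rewrite ltr_pdivrMr // => st.
have : ((s + dl) * n%:R <= (s + dl) * (t + 1))%R.
  by apply: ler_wpM2l => //; lra.
rewrite /dl in st *. nra.
Qed.

End Lim.

Section Main.
Context (R : realType) (X : pmetricType R) (phi : X -> R -> X) (L : R -> R)
  (hflow : is_flow phi) (hlip : unif_lipschitz_with phi L)
  (mu : probability (@borelX R X) R).

Lemma lip_near (s : R) (y : X) (d : R) : 0 <= s -> 0 < d ->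
  exists2 rho, 0 < rho & forall y', mdist y y' < rho ->
    forall s', 0 <= s' <= s -> mdist (phi y s') (phi y' s') < d.
Proof.
move=> s0 d0; set T0 := Num.max s 1.
have T0p : 0 < T0 by rewrite lt_max ltr01 orbT.
have [Lp H] := hlip _ T0p.
exists (d / L T0); first by rewrite divr_gt0.
move=> y' yy' s' /andP[s'0 s's]; apply: H => //; first exact: ltW.
by rewrite s'0 /= (le_trans s's)// le_max lexx.
Qed.

Lemma phi_cont_t (y : X) : continuous (phi y).
Proof.
move=> s0.
have h := hflow.1 (y, s0).
have := @continuous2_cvg _ _ _ _ _ _ (fun=> y) id phi y s0 h (cvg_cst y) cvg_id.
exact.
Qed.

Lemma mdist_lip (a b a' b' : X) :
  `|mdist a b - mdist a' b'| <= mdist a a' + mdist b b'.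
Proof.
have t1 := metric_triangle a a' b.
have t2 := metric_triangle a' b' b.
have t3 := metric_triangle a' a b'.
have t4 := metric_triangle a b b'.
have s1 := metric_sym a a'. have s2 := metric_sym b b'.
rewrite ler_norml; apply/andP; split; lra.
Qed.

Lemma g_cont (x y : X) : continuous ((fun s : R => mdist (phi x s) (phi y s)) : R -> R).
Proof.
move=> s0; apply/cvgrPdist_lt => e e0.
have e20 : 0 < e / 2 by rewrite divr_gt0.
have hx := metricType_numDomainType.cvgr_dist_lt (phi_cont_t x s0) e20.
have hy := metricType_numDomainType.cvgr_dist_lt (phi_cont_t y s0) e20.
near=> s.
apply: (le_lt_trans (mdist_lip _ _ _ _)).
rewrite [e]splitr; apply: ltrD; near: s; [exact: (hx (nbhs_filter s0)) | exact: (hy (nbhs_filter s0))].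
Unshelve. all: end_near. Qed.

Lemma open_mdistP (B : set X) :
  (forall y, B y -> exists2 rho, 0 < rho & forall y', mdist y y' < rho -> B y') ->
  open B.
Proof.
move=> H; rewrite openE => y By; rewrite /interior.
apply/metricType_numDomainType.nbhs_mdistP.
have [rho rho0 Hr] := H y By; exists rho => //= y' /Hr.
Qed.

Lemma open_flow (t : R) (x : X) (e : R) : open (bowen_ball_flow phi t x e).
Proof.
apply: open_mdistP => y By.
case: (ltP t 0) => [tlt0|t0].
  exists 1 => // y' _ s /andP[s0 st]; exfalso; lra.
have [c cI cmax] := EVT_max t0 (continuous_subspaceT (A := `[0, t]) (g_cont x y)).
move: cI; rewrite in_itv /= => cI.
have gc := By c cI.
have d0 : 0 < e - mdist (phi x c) (phi y c) by rewrite subr_gt0.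
have [rho rho0 Hr] := lip_near t y _ t0 d0.
exists rho => // y' yy' s sI.
have := Hr y' yy' s sI.
have hs : s \in `[0, t] by rewrite in_itv.
have := cmax s hs.
have := metric_triangle (phi x s) (phi y s) (phi y' s).
lra.
Qed.

Lemma open_single (s : R) (x : X) (e : R) : 0 <= s ->
  open [set y | mdist (phi x s) (phi y s) < e].
Proof.
move=> s0; apply: open_mdistP => y /= By.
have d0 : 0 < e - mdist (phi x s) (phi y s) by rewrite subr_gt0.
have [rho rho0 Hr] := lip_near s y _ s0 d0.
exists rho => // y' yy'.
have hs : 0 <= s <= s by rewrite s0 lexx.
have := Hr y' yy' s hs.
have := metric_triangle (phi x s) (phi y s) (phi y' s).
lra.
Qed.

Lemma open_meas (A : set X) : open A -> measurable (A : set (@borelX R X)).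
Proof. by move=> oA; apply: sub_gen_smallest. Qed.

Lemma meas_flow t x e : measurable (bowen_ball_flow phi t x e : set (@borelX R X)).
Proof. apply: open_meas; exact: open_flow. Qed.

Lemma meas_map n x e : measurable (bowen_ball_map phi n x e : set (@borelX R X)).
Proof.
elim: n => [|n IH].
  have -> : bowen_ball_map phi 0 x e = setT by apply/seteqP; split => y //= _ j.
  exact: measurableT.
have -> : bowen_ball_map phi n.+1 x e =
   bowen_ball_map phi n x e `&` [set y | mdist (phi x n%:R) (phi y n%:R) < e].
  apply/seteqP; split => y /=.
    by move=> H; split; [move=> j jn; apply: H; exact: ltnW | exact: H].
  move=> [H1 H2] j; rewrite ltnS leq_eqVlt => /orP[/eqP->//|]; exact: H1.
apply: measurableI => //; apply: open_meas; exact: open_single.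
Qed.


Lemma P_ge0 (A : set (@borelX R X)) : measurable A -> (0 <= - lne (mu A))%E.
Proof. by move=> mA; rewrite oppe_ge0 lne_le0; exact: probability_le1. Qed.

Lemma P_anti (A B : set (@borelX R X)) : measurable A -> measurable B -> A `<=` B ->
  (- lne (mu B) <= - lne (mu A))%E.
Proof.
move=> mA mB AB; rewrite leeN2 lee_lne ?in_itv /= ?measure_ge0 ?leey //.
by apply: le_measure => //; rewrite inE.
Qed.

Lemma rate_le (P1 P2 : \bar R) (t1 t2 : R) : (0 <= P1)%E -> (P1 <= P2)%E ->
  0 < t2 -> t2 <= t1 -> (P1 * (t1^-1)%:E <= P2 * (t2^-1)%:E)%E.
Proof.
move=> P10 P12 t20 t21.
apply: lee_pmul => //; first by rewrite lee_fin invr_ge0; apply: ltW; apply: lt_le_trans t21.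
rewrite lee_fin lef_pV2 // posrE //; exact: lt_le_trans t21.
Qed.

Lemma C1 (t : R) (n : nat) (x : X) (e : R) :
  (forall j, (j < n)%N -> 0 <= (j%:R : R) <= t) ->
  bowen_ball_flow phi t x e `<=` bowen_ball_map phi n x e.
Proof. by move=> H y Hy j jn; apply: Hy; exact: H. Qed.

Lemma C2 (t : R) (n : nat) (x : X) (e : R) : 0 < e ->
  (forall s, 0 <= s <= t -> exists2 j, (j < n)%N & (j%:R : R) <= s <= j%:R + 1) ->
  bowen_ball_map phi n x (e / L 1) `<=` bowen_ball_flow phi t x e.
Proof.
move=> e0 H y Hy s sI.
have [j jn /andP[js sj]] := H s sI.
have ex : phi x s = phi (phi x j%:R) (s - j%:R) by rewrite -hflow.2.2 subrK.
have ey : phi y s = phi (phi y j%:R) (s - j%:R) by rewrite -hflow.2.2 subrK.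
rewrite ex ey.
have [_ Hl] := hlip _ ltr01.
apply: Hl => //; first exact: (ltW (Hy j jn)).
apply/andP; split; lra.
Qed.


Lemma main_sec (eps : R) : 0 < eps -> forall x : X,
    ((upper_BK_map mu phi x eps <= upper_BK_flow mu phi x eps)%E /\
     (upper_BK_flow mu phi x eps <= upper_BK_map mu phi x (eps / L 1)%R)%E) /\
    ((lower_BK_map mu phi x eps <= lower_BK_flow mu phi x eps)%E /\
     (lower_BK_flow mu phi x eps <= lower_BK_map mu phi x (eps / L 1)%R)%E).
Proof.
move=> e0 x.
have L10 : 0 < L 1 by have [] := hlip _ ltr01.
split; split.
-
  apply: esup_le => W [M [_ HM]].
  exists (Num.Def.trunc (Num.max M 0)).+2 => n nN.
  have n1 : (1 <= n.-1)%N by case: n nN => [|[|n]].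
  exists (n.-1)%:R; split.
    apply: HM.
    have h1 := truncnS_gt (Num.max M 0).
    have h2 : (Num.Def.trunc (Num.max M 0)).+1%:R <= (n.-1)%:R :> R.
      by rewrite ler_nat; case: n nN {n1} => [|[|n]].
    have h3 : M <= Num.max M 0 by rewrite le_max lexx.
    lra.
  rewrite /neglog_rate; apply: rate_le.
  - apply: P_ge0; exact: meas_map.
  - apply: P_anti; [exact: meas_flow | exact: meas_map |].
    apply: C1 => j jn; rewrite ler0n /= ler_nat.
    by case: n nN jn {n1} => [|n] //= _; rewrite ltnS.
  - by rewrite ltr0n.
  - by rewrite ler_nat leq_pred.
-
  apply: esup_le_factor.
    move=> n; apply: mule_ge0; first by apply: P_ge0; exact: meas_map.
    by rewrite lee_fin invr_ge0.
  move=> t t1.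
  have t0 : 0 <= t by lra.
  have /andP[tr rt] := truncn_itv t0.
  exists (Num.Def.trunc t).+1; split.
  - exact: ltW.
  - by move: tr; rewrite -natr1; lra.
  - have nz : (Num.Def.trunc t).+1%:R != 0 :> R by rewrite pnatr_eq0.
    have tz : t != 0 by rewrite gt_eqF //; lra.
    rewrite /neglog_rate -muleA -EFinM.
    have -> : (((Num.Def.trunc t).+1%:R)^-1 * ((Num.Def.trunc t).+1%:R / t)) = t^-1.
      by rewrite mulrA mulVf // mul1r.
    apply: lee_wpmul2r; first by rewrite lee_fin invr_ge0.
    apply: P_anti; [exact: meas_map | exact: meas_flow |].
    apply: C2 => // s /andP[s0 st].
    have /andP[ts st'] := truncn_itv s0.
    exists (Num.Def.trunc s).
      by rewrite -(ltr_nat R); apply: le_lt_trans ts _; apply: le_lt_trans st rt.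
    by rewrite ts /=; move: st'; rewrite -natr1 => /ltW.
-
  apply: einf_le => N; exists N%:R => t Nt.
  have t0 : 0 < t by apply: le_lt_trans Nt.
  have /andP[tr rt] := truncn_itv (ltW t0).
  exists (Num.Def.trunc t).+1; split.
    by apply: ltnW; rewrite -(ltr_nat R); apply: lt_trans Nt rt.
  rewrite /neglog_rate; apply: rate_le => //.
  - apply: P_ge0; exact: meas_map.
  - apply: P_anti; [exact: meas_flow | exact: meas_map |].
    apply: C1 => j jn; rewrite ler0n /=.
    by apply: le_trans tr; rewrite ler_nat -ltnS.
  - exact: ltW.
-
  apply: einf_le2 => W [M [_ HM]].
  exists (Num.Def.trunc (Num.max M 0)).+1 => n nN.
  exists n%:R; split.
    apply: HM.
    have h1 := truncnS_gt (Num.max M 0).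
    have h2 : (Num.Def.trunc (Num.max M 0)).+1%:R <= n%:R :> R by rewrite ler_nat.
    have h3 : M <= Num.max M 0 by rewrite le_max lexx.
    lra.
  rewrite /neglog_rate; apply: lee_wpmul2r; first by rewrite lee_fin invr_ge0.
  apply: P_anti; [exact: meas_map | exact: meas_flow |].
  apply: C2 => // s /andP[s0 sn].
  have n0 : (0 < n)%N by case: n nN {sn}.
  case: (ltP s n%:R) => [slt|sge].
    have /andP[ts st'] := truncn_itv s0.
    exists (Num.Def.trunc s).
      by rewrite -(ltr_nat R); apply: le_lt_trans ts _.
    by rewrite ts /=; move: st'; rewrite -natr1 => /ltW.
  exists n.-1; first by rewrite prednK.
  have hn : (n.-1)%:R + 1 = n%:R :> R by rewrite natr1 prednK.
  have hn' : (n.-1)%:R <= n%:R :> R by rewrite ler_nat leq_pred.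
  apply/andP; split; lra.
Qed.

End Main.

Theorem proposition3p1 (R : realType) (X : pmetricType R)
  (phi : X -> R -> X) (L : R -> R)
  (Xcompact : compact [set: X])
  (hflow : is_flow phi)
  (hlip : unif_lipschitz_with phi L)
  (mu : probability (@borelX R X) R) :
  forall (eps : R), 0 < eps -> forall x : X,
    ((upper_BK_map mu phi x eps <= upper_BK_flow mu phi x eps)%E /\
     (upper_BK_flow mu phi x eps <= upper_BK_map mu phi x (eps / L 1)%R)%E) /\
    ((lower_BK_map mu phi x eps <= lower_BK_flow mu phi x eps)%E /\
     (lower_BK_flow mu phi x eps <= lower_BK_map mu phi x (eps / L 1)%R)%E).
Proof. exact: (@main_sec R X phi L hflow hlip mu). Qed.
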